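(* Let $G$ be a simple connected bipartite graph on $n\ge 3$ vertices with maximum degree $\Delta\le n-2$ and Wiener index $W$. Suppose $\deg(v_1)=\cdots=\deg(v_k)=\Delta$ for some $1\le k\le n$, and for $1\le i\le k$ let $a_i=4(W-D_i-t_{v_i}\Delta)(\Delta+1)+2n\Delta^{2}+nD_i+nt_{v_i}\Delta$ and $b_i=4D_i^{2}+8D_it_{v_i}\Delta+4t_{v_i}^{2}\Delta^{2}-8W\Delta^{2}-4WD_i-4Wt_{v_i}\Delta$. Then (i) $\displaystyle q^{\mathcal{D}}(G)\ge \max_{1\le i\le k}\frac{a_i+\sqrt{a_i^{2}+4b_i(1+\Delta)(n-\Delta-1)}}{2(1+\Delta)(n-\Delta-1)}$; (ii) $\displaystyle q^{\mathcal{D}}_{min}(G)\le \min_{1\le i\le k}\frac{a_i-\sqrt{a_i^{2}+4b_i(1+\Delta)(n-\Delta-1)}}{2(1+\Delta)(n-\Delta-1)}$.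
   Context: $G$ has vertex set $\{v_1,\dots,v_n\}$; $d_G$ is the graph distance; $\mathcal{D}(G)=(d_G(v_i,v_j))$. $D_i=\sum_{j\ne i}d_G(v_i,v_j)$ is the transmission of $v_i$, $Tr(G)=\mathrm{diag}(D_1,\dots,D_n)$, $\mathcal{Q}(G)=Tr(G)+\mathcal{D}(G)$. $W=\sum_{i<j}d_G(v_i,v_j)$. For a vertex $v$ of degree $d_v$, $t_v=\frac{1}{d_v}\sum_{v_j\sim v}D_j$. $q^{\mathcal{D}}(G)$, $q^{\mathcal{D}}_{min}(G)$ are the largest and least eigenvalues of $\mathcal{Q}(G)$. *)

(* Defs.v *)
From HB Require Import structures.
From mathcomp Require Import all_boot all_order all_algebra.
From mathcomp Require Import reals.
Set Implicit Arguments. Unset Strict Implicit. Unset Printing Implicit Defensive.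
Import Order.TTheory GRing.Theory Num.Theory.

(* A simple graph on the vertex set 'I_n (vertex v_{i+1} is the ordinal i),
   given by an adjacency relation [adj]. *)
Definition simple_graph (n : nat) (adj : rel 'I_n) : Prop :=
  symmetric adj /\ irreflexive adj.

Definition connected_graph (n : nat) (adj : rel 'I_n) : Prop :=
  forall u v, connect adj u v.

Definition bipartite_graph (n : nat) (adj : rel 'I_n) : Prop :=
  exists A : {set 'I_n}, forall u v, adj u v -> (u \in A) != (v \in A).

Definition deg (n : nat) (adj : rel 'I_n) (v : 'I_n) : nat :=
  #|[set w | adj v w]|.

Definition max_deg (n : nat) (adj : rel 'I_n) : nat :=
  \max_(v : 'I_n) deg adj v.

Definition walk_len (n : nat) (adj : rel 'I_n) (m : nat) (u v : 'I_n) : bool :=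
  [exists p : m.-tuple 'I_n, path adj u p && (last u p == v)].

(* graph distance: the least m such that there is a walk of length m from u to v
   (for a connected graph on n vertices it is < n) *)
Definition gdist (n : nat) (adj : rel 'I_n) (u v : 'I_n) : nat :=
  find (fun m => walk_len adj m u v) (iota 0 n).

Local Open Scope ring_scope.
Section Quantities.
Variables (R : realType) (n : nat) (adj : rel 'I_n).

Definition transmission (i : 'I_n) : R :=
  \sum_(j : 'I_n | j != i) (gdist adj i j)%:R.

Definition wiener : R :=
  \sum_(i : 'I_n) \sum_(j : 'I_n | (i < j)%N) (gdist adj i j)%:R.

Definition tv (v : 'I_n) : R :=
  (deg adj v)%:R^-1 * \sum_(j : 'I_n | adj v j) transmission j.

Definition distQ : 'M[R]_n :=
  \matrix_(i, j) ((i == j)%:R * transmission i + (gdist adj i j)%:R).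

Definition largest_eig (M : 'M[R]_n) (q : R) : Prop :=
  eigenvalue M q /\ forall mu, eigenvalue M mu -> mu <= q.

Definition least_eig (M : 'M[R]_n) (q : R) : Prop :=
  eigenvalue M q /\ forall mu, eigenvalue M mu -> q <= mu.

End Quantities.

(* Main.v *)
Require Import Defs.
From HB Require Import structures.
From mathcomp Require Import all_boot all_order all_algebra.
From mathcomp Require Import reals.
From mathcomp Require Import complex ring zify.
Import Order.TTheory GRing.Theory Num.Theory.
Local Open Scope ring_scope.

Section S.
Local Open Scope sesquilinear_scope.
Variable R : realType.
Local Notation C := (complex R).
Local Notation f := (real_complex R).

Lemma f_real (r : R) : f r \is Num.real.
Proof. by apply/complex_realP; exists r. Qed.

Lemma f_conj (r : R) : (f r)^* = f r.
Proof. by rewrite conj_Creal // f_real. Qed.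

Lemma fmx m p (M : 'M[R]_(m,p)) i j : f (M i j) = (map_mx f M) i j.
Proof. by rewrite mxE. Qed.

Lemma exists_max n (d : 'I_n -> R) : (0 < n)%N -> exists i0, forall i, d i <= d i0.
Proof.
move=> n0; have i0 : 'I_n := Ordinal n0.
case: (@arg_maxP _ _ 'I_n i0 xpredT d isT) => j _ Hj.
by exists j => i; exact: Hj.
Qed.

Lemma rayleigh_max n (A : 'M[R]_n) : (0 < n)%N -> A^T = A ->
  exists q, eigenvalue A q /\
   (forall x : 'rV[R]_n, (x *m A *m x^T) 0 0 <= q * (x *m x^T) 0 0).
Proof.
move=> n0 AT.
set Ac : 'M[C]_n := map_mx f A.
have Acreal : Ac \is a mxOver Num.real.
  by apply/mxOverP => i j; rewrite mxE f_real.
have Acsym : Ac \is symmetricmx.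
  by apply/is_hermitianmxP; rewrite expr0 scale1r map_mx_id // map_trmx AT.
have Acherm : Ac \is hermsymmx by rewrite realsym_hermsym.
have /orthomx_spectralP AcE := symmetric_normalmx Acsym Acreal.
set P := spectralmx Ac in AcE.
set sp := spectral_diag Ac in AcE.
have Pu : P \is unitarymx := spectral_unitarymx Ac.
have spr : sp \is a mxOver Num.real := hermitian_spectral_diag_real Acherm.
have Punit : P \in unitmx := unitarymx_unit Pu.
have invP : invmx P = P^t* := invmx_unitary Pu.
have PtP : P^t* *m P = 1%:M by rewrite -invP mulVmx.
have spE : forall i, sp 0 i = f (complex.Re (sp 0 i)).
  by move=> i; rewrite RRe_real // (mxOverP spr).
have [i0 Hi0] := @exists_max n (fun i => complex.Re (sp 0 i)) n0.
set q := complex.Re (sp 0 i0).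
exists q; split.
  have eigc : eigenvalue Ac (sp 0 i0).
    apply/eigenvalueP; exists (row i0 P).
      rewrite AcE !mulmxA -row_mul mulmxV // row1 -rowE row_diag_mx.
      by rewrite -scalemxAl -rowE.
    apply/eqP => H0.
    have := @row1 C n i0; rewrite -(unitarymxP Pu) row_mul H0 mul0mx.
    move/rowP/(_ i0); rewrite !mxE !eqxx /= => /esym/eqP; by rewrite oner_eq0.
  move: eigc; rewrite eigenvalue_root_char spE -/q /Ac -map_char_poly.
  by rewrite /root horner_map fmorph_eq0 => H; rewrite eigenvalue_root_char.
move=> x.
set xc : 'rV[C]_n := map_mx f x.
have xcT : xc^t* = map_mx f x^T.
  by apply/matrixP => i j; rewrite !mxE f_conj.
set y := xc *m P^t*.
have yT : y^t* = P *m xc^t*.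
  by rewrite /y trmx_mul map_mxM trmxCK.
have E1 : f ((x *m A *m x^T) 0 0) = (y *m diag_mx sp *m y^t*) 0 0.
  have M1 : map_mx f (x *m A *m x^T) = xc *m Ac *m xc^t*.
    by rewrite xcT !map_mxM.
  rewrite fmx M1 AcE yT /y invP.
  by rewrite !mulmxA.
have E2 : f ((x *m x^T) 0 0) = (y *m y^t*) 0 0.
  have M2 : map_mx f (x *m x^T) = xc *m xc^t*.
    by rewrite xcT !map_mxM.
  rewrite fmx M2 yT /y.
  by rewrite mulmxA -(mulmxA xc) PtP mulmx1.
have fM : forall a b : R, f (a * b) = f a * f b by move=> a b; rewrite rmorphM.
rewrite -lecR fM E1 E2 mul_mx_diag !mxE big_distrr /=.
apply: ler_sum => k _; rewrite [in X in X <= _]mxE spE.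
set z := (y 0 k).
rewrite -subr_ge0 mulrAC [X in _ - X]mulrC -mulrBl.
apply: mulr_ge0; last by rewrite /z !mxE; exact: mul_conjC_ge0.
by rewrite subr_ge0 lecR Hi0.
Qed.
End S.

Lemma iotaE N : (3 <= N)%N -> iota 0 N = [:: 0%N, 1%N, 2%N & iota 3 (N - 3)].
Proof. by case: N => [|[|[|N]]] //= _; rewrite subSS !subSS subn0. Qed.

Section Graph.
Variables (n : nat) (adj : rel 'I_n).
Hypotheses (Hs : symmetric adj) (Hi : irreflexive adj) (n3 : (3 <= n)%N).

Lemma walk_rev m i j : walk_len adj m i j -> walk_len adj m j i.
Proof.
case/existsP => p /andP[pp /eqP lp]; apply/existsP.
have sz : size (rev (belast i p)) == m by rewrite size_rev size_belast size_tuple.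
exists (Tuple sz) => /=; apply/andP; split.
  rewrite -lp rev_path; apply: sub_path pp => x y /=; by rewrite Hs.
move: lp; case: (tval p) => [|y s] /= <- //.
by rewrite rev_cons last_rcons.
Qed.

Lemma gd_sym i j : gdist adj i j = gdist adj j i.
Proof.
by rewrite /gdist; apply: eq_find => m; apply/idP/idP; apply: walk_rev.
Qed.

Lemma w0 i j : walk_len adj 0 i j = (i == j).
Proof.
apply/existsP/idP => [[p]|/eqP ->]; last by exists [tuple]; rewrite /= eqxx.
by rewrite tuple0 /= eq_sym.
Qed.

Lemma w1 i j : walk_len adj 1 i j = adj i j.
Proof.
apply/existsP/idP => [[p]|H]; last by exists [tuple j]; rewrite /= H !eqxx.
case: p / tupleP => x t; rewrite tuple0 /= andbT => /andP[H /eqP <-] //.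
Qed.

Lemma gdist_find i j : gdist adj i j =
  find (fun m => walk_len adj m i j) [:: 0%N, 1%N, 2%N & iota 3 (n - 3)].
Proof. by rewrite /gdist iotaE. Qed.

Lemma gd_ii i : gdist adj i i = 0%N.
Proof. by rewrite gdist_find /= w0 eqxx. Qed.

Lemma gd_ne i j : i != j -> (1 <= gdist adj i j)%N.
Proof. by move=> H; rewrite gdist_find /= w0 (negbTE H). Qed.

Lemma gd_adj i j : adj i j -> gdist adj i j = 1%N.
Proof.
move=> H; have ne : i != j by apply: contraTneq H => ->; rewrite Hi.
by rewrite gdist_find /= w0 (negbTE ne) w1 H.
Qed.

Lemma gd_two v u w : bipartite_graph adj -> adj v u -> adj v w -> u != w ->
  gdist adj u w = 2%N.
Proof.
move=> [A HA] Hu Hw ne.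
have nuw : ~~ adj u w.
  apply/negP => Huw; move: (HA _ _ Hu) (HA _ _ Hw) (HA _ _ Huw).
  by case: (v \in A); case: (u \in A); case: (w \in A).
have w2 : walk_len adj 2 u w.
  apply/existsP; exists [tuple v; w]; by rewrite /= Hs Hu Hw !eqxx.
by rewrite gdist_find /= w0 (negbTE ne) w1 (negbTE nuw) w2.
Qed.
End Graph.

Section Q.
Variable R : realType.

Lemma quad_split n (F : 'I_n -> 'I_n -> R) (X : {set 'I_n}) (al be : R) :
  \sum_i \sum_j (if i \in X then al else be) * (if j \in X then al else be) * F i j
  = al ^+ 2 * (\sum_(i in X) \sum_(j in X) F i j)
    + al * be * (\sum_(i in X) \sum_(j | j \notin X) F i j
                 + \sum_(i | i \notin X) \sum_(j in X) F i j)
    + be ^+ 2 * (\sum_(i | i \notin X) \sum_(j | j \notin X) F i j).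
Proof.
set x := fun j => if j \in X then al else be.
have inner : forall i, \sum_j x i * x j * F i j =
   x i * al * (\sum_(j in X) F i j) + x i * be * (\sum_(j | j \notin X) F i j).
  move=> i; rewrite (bigID (fun j => j \in X)) /=; congr (_ + _);
  rewrite big_distrr; apply: eq_bigr => j Hj; rewrite /x; first by rewrite Hj.
  by rewrite (negbTE Hj).
under eq_bigr => i _ do rewrite inner.
rewrite (bigID (fun i => i \in X)) /=.
under eq_bigr => i Hi do rewrite /x Hi.
under [X in _ + X]eq_bigr => i Hi do rewrite /x (negbTE Hi).
rewrite !big_split /= -!big_distrr /=.
ring.
Qed.
End Q.

Section K.
Variable R : realType.

Lemma quadE n (x : 'rV[R]_n) (A : 'M[R]_n) :
  (x *m A *m x^T) 0 0 = \sum_i \sum_j x 0 i * x 0 j * A i j.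
Proof.
rewrite mxE.
under eq_bigr => j _ do rewrite !mxE big_distrl /=.
rewrite exchange_big /=; apply: eq_bigr => i _; apply: eq_bigr => j _.
by rewrite mulrAC.
Qed.

Lemma normE n (x : 'rV[R]_n) : (x *m x^T) 0 0 = \sum_j x 0 j ^+ 2.
Proof. by rewrite mxE; apply: eq_bigr => j _; rewrite mxE expr2. Qed.

Lemma norm_pos n (x : 'rV[R]_n) : x != 0 -> 0 < (x *m x^T) 0 0.
Proof.
move=> nx; rewrite normE lt_def sumr_ge0 ?andbT; last by move=> j _; exact: sqr_ge0.
apply: contra nx; rewrite psumr_eq0; last by move=> j _; exact: sqr_ge0.
move=> /allP H; apply/eqP/rowP => j; rewrite mxE.
by move: (H j (mem_index_enum j)); rewrite /= sqrf_eq0 => /eqP.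
Qed.

Lemma eig_le n (A : 'M[R]_n) q mu :
  (forall x : 'rV[R]_n, (x *m A *m x^T) 0 0 <= q * (x *m x^T) 0 0) ->
  eigenvalue A mu -> mu <= q.
Proof.
move=> H /eigenvalueP [v Hv nv].
have E : (v *m A *m v^T) 0 0 = mu * (v *m v^T) 0 0.
  by rewrite Hv -scalemxAl mxE.
have := H v; rewrite E.
by rewrite ler_pM2r ?norm_pos.
Qed.

Lemma eig_ge n (A : 'M[R]_n) q mu :
  (forall x : 'rV[R]_n, q * (x *m x^T) 0 0 <= (x *m A *m x^T) 0 0) ->
  eigenvalue A mu -> q <= mu.
Proof.
move=> H /eigenvalueP [v Hv nv].
have E : (v *m A *m v^T) 0 0 = mu * (v *m v^T) 0 0.
  by rewrite Hv -scalemxAl mxE.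
have := H v; rewrite E.
by rewrite ler_pM2r ?norm_pos.
Qed.

Lemma rayleigh_min n (A : 'M[R]_n) : (0 < n)%N -> A^T = A ->
  exists q, eigenvalue A q /\
   (forall x : 'rV[R]_n, q * (x *m x^T) 0 0 <= (x *m A *m x^T) 0 0).
Proof.
move=> n0 AT.
have AT' : (- A)^T = - A by rewrite linearN /= AT.
have [q [Heq Hq]] := @rayleigh_max R n (- A) n0 AT'.
exists (- q); split.
  move/eigenvalueP: Heq => [v Hv nv]; apply/eigenvalueP; exists v => //.
  by rewrite scaleNr -Hv mulmxN opprK.
move=> x; have := Hq x; rewrite mulmxN mulNmx.
have E : forall M : 'M[R]_(1,1), (- M) 0 0 = - M 0 0 by move=> M; rewrite mxE.
rewrite E.
by rewrite mulNr lerNl.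
Qed.
End K.

Section K2.
Variable R : realType.

Lemma rsplit2 n (F : 'I_n -> 'I_n -> R) (X : {set 'I_n}) (P : pred 'I_n) :
  \sum_(i | P i) \sum_j F i j = \sum_(i | P i) \sum_(j in X) F i j
     + \sum_(i | P i) \sum_(j | j \notin X) F i j.
Proof.
rewrite -big_split /=; apply: eq_bigr => i _.
by rewrite (bigID (fun j => j \in X)).
Qed.

Lemma tot_split n (F : 'I_n -> 'I_n -> R) (X : {set 'I_n}) :
  \sum_i \sum_j F i j = \sum_(i in X) \sum_(j in X) F i j
     + \sum_(i in X) \sum_(j | j \notin X) F i j
     + \sum_(i | i \notin X) \sum_(j in X) F i j
     + \sum_(i | i \notin X) \sum_(j | j \notin X) F i j.
Proof.
rewrite (bigID (fun i => i \in X)) /= (rsplit2 _ F X) (rsplit2 _ F X).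
by rewrite !addrA.
Qed.

Lemma norm_split n (X : {set 'I_n}) (al be : R) :
  \sum_j (if j \in X then al else be) ^+ 2
  = al ^+ 2 * (#|X|)%:R + be ^+ 2 * (#|~: X|)%:R.
Proof.
rewrite (bigID (fun j => j \in X)) /=.
rewrite [Y in _ + Y](eq_bigl (fun j => j \in ~: X)); last by move=> j; rewrite inE.
rewrite (eq_bigr (fun _ => al ^+ 2)); last by move=> j ->.
rewrite [Y in _ + Y](eq_bigr (fun _ => be ^+ 2)); last first.
  move=> j; rewrite inE => Hj; by rewrite (negbTE Hj).
by rewrite !sumr_const !mulr_natr.
Qed.


End K2.

Section Sums.
Variables (R : realType) (n : nat) (adj : rel 'I_n).
Hypotheses (Hs : symmetric adj) (Hi : irreflexive adj) (n3 : (3 <= n)%N)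
  (Hb : bipartite_graph adj).
Local Notation d i j := ((gdist adj i j)%:R : R).
Local Notation D := (transmission R adj).

Lemma dsym i j : d i j = d j i.
Proof. by rewrite gd_sym. Qed.

Lemma dii i : d i i = 0.
Proof. by rewrite gd_ii. Qed.

Lemma rowsum_d i : \sum_j d i j = D i.
Proof. by rewrite (bigD1 i) //= dii add0r. Qed.

Lemma rowsum_Q i : \sum_j (distQ R adj) i j = 2 * D i.
Proof.
under eq_bigr => j _ do rewrite mxE.
rewrite big_split /= rowsum_d (bigD1 i) //= eqxx mul1r big1 ?addr0.
  by rewrite mulr2n mulrDl mul1r.
by move=> j /negbTE; rewrite eq_sym => ->; rewrite mul0r.
Qed.

Lemma sumD : \sum_i D i = 2 * wiener R adj.
Proof.
rewrite /transmission /wiener mulr2n mulrDl mul1r.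
have E : forall i, \sum_(j | j != i) d i j =
   \sum_(j : 'I_n | (i < j)%N) d i j + \sum_(j : 'I_n | (j < i)%N) d i j.
  move=> i; rewrite (bigID (fun j : 'I_n => (i < j)%N)) /=; congr (_ + _); apply: eq_bigl => j.
    by rewrite andb_idl // => H; apply: contraTneq H => ->; rewrite ltnn.
  by rewrite -leqNgt ltn_neqAle.
under eq_bigr => i _ do rewrite E.
rewrite big_split /=; congr (_ + _).
rewrite (exchange_big_dep xpredT) //=.
by apply: eq_bigr => j _; apply: eq_bigr => i _; rewrite dsym.
Qed.


Lemma Qsym i j : distQ R adj i j = distQ R adj j i.
Proof.
rewrite !mxE dsym; case: (eqVneq i j) => [->|H] //.
by rewrite !mul0r.
Qed.

Variable v0 : 'I_n.
Local Notation N := [set w | adj v0 w].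
Local Notation X := (v0 |: N).
Local Notation De := ((#|N|)%:R : R).

Lemma v0N : v0 \notin N.
Proof. by rewrite inE Hi. Qed.

Lemma sumD_N : \sum_(i in N) D i = De * tv R adj v0.
Proof.
have E : \sum_(i in N) D i = \sum_(j | adj v0 j) D j.
  by apply: eq_bigl => j; rewrite inE.
rewrite /tv /deg -E; case: (posnP #|N|) => H.
  have : #|N| == 0%N by rewrite H.
  by rewrite cards_eq0 => /eqP ->; rewrite big_set0 !mulr0.
by rewrite mulrA mulfV ?mul1r // pnatr_eq0 -lt0n.
Qed.

Lemma sum_ind i : i \in N -> \sum_(j in N) ((j == i)%:R : R) = 1.
Proof.
move=> Hi'; rewrite (bigD1 i) //= eqxx big1 ?addr0 // => j /andP[_ /negbTE ->] //.
Qed.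

Lemma sumd_X : \sum_(i in X) \sum_(j in X) d i j = 2 * De ^+ 2.
Proof.
rewrite big_setU1 ?v0N //= big_setU1 ?v0N //= dii add0r.
have E1 : \sum_(j in N) d v0 j = De.
  rewrite -sumr_const; apply: eq_bigr => j; rewrite inE => H.
  by rewrite gd_adj.
have E2 : forall i, i \in N -> \sum_(j in X) d i j = 2 * De - 1.
  move=> i Hi'; rewrite big_setU1 ?v0N //= dsym.
  move: (Hi'); rewrite inE => Hv; rewrite gd_adj //.
  have -> : \sum_(j in N) d i j = \sum_(j in N) (2 - 2 * (j == i)%:R).
    apply: eq_bigr => j Hj; case: (eqVneq j i) => [->|ne]; first by rewrite dii mulr1 subrr.
    move: Hj; rewrite inE => Hj; rewrite mulr0 subr0.
    by rewrite (@gd_two n adj Hs n3 _ _ _ Hb Hv Hj) // eq_sym.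
  rewrite big_split /= sumr_const sumrN -big_distrr /= sum_ind //.
  rewrite -mulr_natr; ring.
rewrite (eq_bigr _ E2).
rewrite E1 sumr_const -mulr_natr; ring.
Qed.

Lemma s11_val : \sum_(i in X) \sum_(j in X) distQ R adj i j
   = D v0 + De * tv R adj v0 + 2 * De ^+ 2.
Proof.
have E : forall i, i \in X -> \sum_(j in X) distQ R adj i j
     = D i + \sum_(j in X) d i j.
  move=> i Hi'; under eq_bigr => j _ do rewrite mxE.
  rewrite big_split /= (bigD1 i) //= eqxx mul1r big1 ?addr0 //.
  by move=> j /andP[_ /negbTE]; rewrite eq_sym => ->; rewrite mul0r.
under eq_bigr => i Hi' do rewrite (E i Hi').
by rewrite big_split /= sumd_X big_setU1 ?v0N //= sumD_N.
Qed.

Lemma RX_val : \sum_(i in X) \sum_j distQ R adj i j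
   = 2 * (D v0 + De * tv R adj v0).
Proof.
under eq_bigr => i _ do rewrite rowsum_Q.
by rewrite -big_distrr /= big_setU1 ?v0N //= sumD_N.
Qed.

Lemma T_val : \sum_i \sum_j distQ R adj i j = 4 * wiener R adj.
Proof.
under eq_bigr => i _ do rewrite rowsum_Q.
by rewrite -big_distrr /= sumD mulrA -natrM.
Qed.

Lemma s21_val : \sum_(i | i \notin X) \sum_(j in X) distQ R adj i j
   = \sum_(i in X) \sum_(j | j \notin X) distQ R adj i j.
Proof.
rewrite exchange_big /=; apply: eq_bigr => i _; apply: eq_bigr => j _.
exact: Qsym.
Qed.

Lemma Q_ge0 i j : 0 <= distQ R adj i j.
Proof.
rewrite mxE addr_ge0 // mulr_ge0 //.
by apply: sumr_ge0 => k _.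
Qed.

Lemma s12_pos : (#|N|.+1 < n)%N ->
  0 < \sum_(i in X) \sum_(j | j \notin X) distQ R adj i j.
Proof.
move=> Hc.
have [j0 Hj0] : exists j0, j0 \notin X.
  have := cardsC X; rewrite card_ord cardsU1 v0N /= => E.
  have : (0 < #|~: X|)%N.
    by rewrite lt0n; apply/eqP => E0; move: E Hc; rewrite E0 addn0 add1n => ->; rewrite ltnn.
  by case/card_gt0P => j0; rewrite inE => H; exists j0.
rewrite (bigD1 v0) ?setU11 //=.
apply: ltr_wpDr; first by apply: sumr_ge0 => i _; apply: sumr_ge0 => *; exact: Q_ge0.
rewrite (bigD1 j0) //=.
apply: ltr_wpDr; first by apply: sumr_ge0 => *; exact: Q_ge0.
have ne : v0 != j0 by apply: contraNneq Hj0 => <-; rewrite setU11.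
rewrite mxE (negbTE ne) mul0r add0r ltr0n.
exact: gd_ne.
Qed.
Lemma key (Hc : (#|N|.+1 < n)%N) :
  let W := wiener R adj in let nr : R := n%:R in
  let Dv := D v0 in let t := tv R adj v0 in
  let a := 4 * (W - Dv - t * De) * (De + 1) + 2 * nr * De ^+ 2 + nr * Dv
           + nr * t * De in
  let b := 4 * Dv ^+ 2 + 8 * Dv * t * De + 4 * t ^+ 2 * De ^+ 2
           - 8 * W * De ^+ 2 - 4 * W * Dv - 4 * W * t * De in
  let c := (1 + De) * (nr - De - 1) in
  0 < c /\ 0 <= a ^+ 2 + 4 * b * c /\
  forall mu, c * mu ^+ 2 - a * mu - b = 0 ->
   exists x : 'rV[R]_n, (x *m distQ R adj *m x^T) 0 0 = mu * (x *m x^T) 0 0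
      /\ 0 < (x *m x^T) 0 0.
Proof.
move=> W nr Dv t a b c.
set F := distQ R adj.
set s11 := \sum_(i in X) \sum_(j in X) F i j.
set s12 := \sum_(i in X) \sum_(j | j \notin X) F i j.
set s21 := \sum_(i | i \notin X) \sum_(j in X) F i j.
set s22 := \sum_(i | i \notin X) \sum_(j | j \notin X) F i j.
have h11 : s11 = Dv + De * t + 2 * De ^+ 2 by exact: s11_val.
have hRX : s11 + s12 = 2 * (Dv + De * t) by rewrite /s11 /s12 -rsplit2 RX_val.
have hT : s11 + s12 + s21 + s22 = 4 * W by rewrite -tot_split T_val.
have h21 : s21 = s12 by exact: s21_val.
have h12 : s12 = Dv + De * t - 2 * De ^+ 2.
  by apply: (addrI s11); rewrite hRX h11; ring.
have h22 : s22 = 4 * W - 3 * (Dv + De * t) + 2 * De ^+ 2.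
  by apply: (addrI (s11 + s12 + s21)); rewrite hT h21 h12 h11; ring.
have hcard := cardsC X; rewrite card_ord cardsU1 v0N /= in hcard.
have hp : (#|X|)%:R = De + 1 :> R by rewrite cardsU1 v0N add1n -addn1 natrD.
have hr : (#|~: X|)%:R = nr - De - 1 :> R.
  have E := congr1 (fun m : nat => m%:R : R) hcard.
  by rewrite /= !natrD in E; rewrite /nr -E; ring.
have rpos : 0 < nr - De - 1.
  rewrite -hr ltr0n lt0n; apply/eqP => E0; move: hcard Hc.
  by rewrite E0 addn0 add1n => ->; rewrite ltnn.
have ppos : 0 < De + 1 by rewrite ltr_pwDr // ler0n.
have cpos : 0 < c by rewrite /c addrC; apply: mulr_gt0.
split => //; split.
  have -> : a ^+ 2 + 4 * b * c =
     ((nr - De - 1) * s11 - (De + 1) * s22) ^+ 2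
     + 4 * (De + 1) * (nr - De - 1) * s12 ^+ 2.
    by rewrite h11 h12 h22 /a /b /c; ring.
  apply: addr_ge0; first exact: sqr_ge0.
  apply: mulr_ge0; last exact: sqr_ge0.
  by apply: mulr_ge0; [apply: mulr_ge0 => //; exact: ltW | exact: ltW].
move=> mu Hmu.
set al := s12; set be := mu * (De + 1) - s11.
exists (\row_j (if j \in X then al else be)).
have Nm : ((\row_j (if j \in X then al else be)) *m (\row_j (if j \in X then al else be))^T) 0 0
   = al ^+ 2 * (De + 1) + be ^+ 2 * (nr - De - 1).
  rewrite normE (eq_bigr (fun j => (if j \in X then al else be) ^+ 2)); last by move=> j _; rewrite mxE.
  by rewrite norm_split hp hr.
split.
  rewrite quadE Nm.
  rewrite (eq_bigr (fun i => \sum_j (if i \in X then al else be) * (if j \in X then al else be) * F i j)); last first.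
    by move=> i _; apply: eq_bigr => j _; rewrite !mxE.
  rewrite quad_split -/s11 -/s12 -/s21 -/s22.
  apply/eqP; rewrite -subr_eq0; apply/eqP.
  transitivity (- be * (c * mu ^+ 2 - a * mu - b)); last by rewrite Hmu mulr0.
  by rewrite /be /al h21 h22 h12 h11 /a /b /c; ring.
rewrite Nm; apply: ltr_wpDr.
  by apply: mulr_ge0; [exact: sqr_ge0 | exact: ltW].
apply: mulr_gt0 => //; apply: exprn_gt0.
exact: s12_pos.
Qed.

End Sums.

Lemma root_lem (R : realType) (a b c s : R) : c != 0 ->
  s ^+ 2 = a ^+ 2 + 4 * b * c ->
  c * ((a + s) / (2 * c)) ^+ 2 - a * ((a + s) / (2 * c)) - b = 0.
Proof.
move=> c0 Hs.
have -> : c * ((a + s) / (2 * c)) ^+ 2 - a * ((a + s) / (2 * c)) - b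
   = (s ^+ 2 - (a ^+ 2 + 4 * b * c)) / (4 * c).
  by field; rewrite c0.
by rewrite Hs subrr mul0r.
Qed.

Theorem corollary4p2 (R : realType) (n : nat) (adj : rel 'I_n)
  (k : nat) (v : 'I_k -> 'I_n) :
  simple_graph adj -> connected_graph adj -> bipartite_graph adj ->
  (3 <= n)%N -> (max_deg adj <= n - 2)%N ->
  (1 <= k)%N -> injective v ->
  (forall i, deg adj (v i) = max_deg adj) ->
  let Dl : R := (max_deg adj)%:R in
  let W : R := wiener R adj in
  let nr : R := n%:R in
  let a := fun i : 'I_k =>
    4 * (W - transmission R adj (v i) - tv R adj (v i) * Dl) * (Dl + 1)
    + 2 * nr * Dl ^+ 2 + nr * transmission R adj (v i)
    + nr * tv R adj (v i) * Dl in
  let b := fun i : 'I_k =>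
    4 * transmission R adj (v i) ^+ 2
    + 8 * transmission R adj (v i) * tv R adj (v i) * Dl
    + 4 * tv R adj (v i) ^+ 2 * Dl ^+ 2 - 8 * W * Dl ^+ 2
    - 4 * W * transmission R adj (v i) - 4 * W * tv R adj (v i) * Dl in
  let c : R := (1 + Dl) * (nr - Dl - 1) in
  (exists q, largest_eig (distQ R adj) q /\
     forall i, (a i + Num.sqrt (a i ^+ 2 + 4 * b i * c)) / (2 * c) <= q) /\
  (exists q, least_eig (distQ R adj) q /\
     forall i, q <= (a i - Num.sqrt (a i ^+ 2 + 4 * b i * c)) / (2 * c)).
Proof.
move=> [Hs Hi] _ Hb n3 HD _ _ Hdeg Dl W nr a b c.
have n0 : (0 < n)%N by apply: leq_trans n3.
have QT : (distQ R adj)^T = distQ R adj.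
  by apply/matrixP => i j; rewrite mxE (Qsym R n adj Hs).
have [qM [eM HM]] := rayleigh_max R n _ n0 QT.
have [qm [em Hm]] := rayleigh_min R n _ n0 QT.
have per : forall i, 0 < c /\ 0 <= a i ^+ 2 + 4 * b i * c /\
    forall mu, c * mu ^+ 2 - a i * mu - b i = 0 -> qm <= mu /\ mu <= qM.
  move=> i.
  have Hc : (#|[set w | adj (v i) w]|.+1 < n)%N.
    move: (Hdeg i) HD; rewrite /deg => ->; lia.
  case: (key R n adj Hs Hi n3 Hb (v i) Hc) => cpos [dpos Hr].
  rewrite /a /b /c /Dl /W /nr -(Hdeg i) /deg.
  split => //; split => // mu Hmu.
  case: (Hr mu Hmu) => x [Ex Nx]; split.
    by have := Hm x; rewrite Ex ler_pM2r.
  by have := HM x; rewrite Ex ler_pM2r.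
split.
  exists qM; split; first by split => // mu; exact: eig_le.
  move=> i; case: (per i) => cpos [dpos Hr].
  apply: (proj2 (Hr _ _)); apply: root_lem; first by rewrite gt_eqF.
  by rewrite sqr_sqrtr.
exists qm; split; first by split => // mu; exact: eig_ge.
move=> i; case: (per i) => cpos [dpos Hr].
apply: (proj1 (Hr _ _)); apply: root_lem; first by rewrite gt_eqF.
by rewrite sqrrN sqr_sqrtr.
Qed.
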